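(* Let $r\ge 2$ and let $GT(r)$ be the glued binary tree of depth $r$, built from the two copies $T_r^{(1)}$ and $T_r^{(2)}$ of the perfect binary tree of depth $r$. For each $i\in\{1,2\}$, the subgraph of $GT(r)$ induced by $V(T_r^{(i)})$ is an isometric subgraph of $GT(r)$. Moreover, if $u,v\in V(T_r^{(i)})$, then in $GT(r)$ there are exactly two shortest $u,v$-paths if $u$ and $v$ are both quasi-leaves, and otherwise the shortest $u,v$-path is unique.
   Context: A perfect binary tree of depth $r\ge1$ is a rooted tree in which every non-leaf vertex has exactly $2$ children and all leaves have depth $r$. The glued binary tree $GT(r)$ is obtained from two copies $T_r^{(1)}$ and $T_r^{(2)}$ of the perfect binary tree of depth $r$ by pairwise identifying their leaves, where each leaf of $T_r^{(1)}$ is identified with its image in $T_r^{(2)}$ under a fixed isomorphism of the two copies. The identified vertices are the quasi-leaves of $GT(r)$; thus the set of quasi-leaves is $V(T_r^{(1)})\cap V(T_r^{(2)})$. A subgraph $H$ of $G$ is isometric if $d_H(u,v)=d_G(u,v)$ for all $u,v\in V(H)$. *)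

(* Defs.v *)
From mathcomp Require Import all_boot.
Set Implicit Arguments. Unset Strict Implicit. Unset Printing Implicit Defensive.

(* walk from u to v: the sequence p lists the vertices after u *)
Definition walk (T : eqType) (e : rel T) (u v : T) (p : seq T) : bool :=
  path e u p && (last u p == v).

Definition gpath (T : eqType) (e : rel T) (u v : T) (p : seq T) : bool :=
  walk e u v p && uniq (u :: p).

Definition is_dist (T : eqType) (e : rel T) (u v : T) (n : nat) : Prop :=
  (exists p, walk e u v p /\ size p = n) /\ (forall p, walk e u v p -> n <= size p).

Definition shortest_path (T : eqType) (e : rel T) (u v : T) (p : seq T) : Prop :=
  gpath e u v p /\ (forall q, walk e u v q -> size p <= size q).

Definition induced (T : finType) (e : rel T) (S : {set T}) : rel T :=
  fun x y => [&& x \in S, y \in S & e x y].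

Definition isometric_induced (T : finType) (e : rel T) (S : {set T}) : Prop :=
  forall u v, u \in S -> v \in S ->
    forall n, is_dist (induced e S) u v n <-> is_dist e u v n.

(* The perfect binary tree of depth r is labelled in heap order:
   nodes 1 .. 2^(r+1)-1, the parent of k >= 2 is k/2, leaves are the
   k with 2^r <= k.  A vertex of GT(r) is a pair (c, k): the copy c : bool
   (false = T_r^(1), true = T_r^(2)) and the heap label k.  Leaves are
   identified across the two copies (via the identity isomorphism of labels);
   the identified vertex is represented with c = false. *)
Definition gt_valid (r : nat) (p : bool * 'I_(2 ^ r.+1)) : bool :=
  (0 < p.2) && ((p.2 < 2 ^ r) || ~~ p.1).

Definition GTV (r : nat) := {p : bool * 'I_(2 ^ r.+1) | @gt_valid r p}.

Definition gt_copy (r : nat) (x : GTV r) : bool := (val x).1.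
Definition gt_label (r : nat) (x : GTV r) : nat := (val x).2.
Definition gt_isleaf (r : nat) (x : GTV r) : bool := 2 ^ r <= gt_label x.

Definition Tset (r : nat) (i : bool) : {set GTV r} :=
  [set x | (gt_copy x == i) || gt_isleaf x].

Definition quasi_leaf (r : nat) (x : GTV r) : bool :=
  x \in Tset r false :&: Tset r true.

Definition T_edge (r : nat) (i : bool) (x y : GTV r) : bool :=
  [&& x \in Tset r i, y \in Tset r i &
      (gt_label x == (gt_label y)./2) || (gt_label y == (gt_label x)./2)].

Definition GT_adj (r : nat) : rel (GTV r) :=
  fun x y => @T_edge r false x y || @T_edge r true x y.

(* Main.v *)
Require Import Defs.
From mathcomp Require Import all_boot zify.
Set Implicit Arguments. Unset Strict Implicit. Unset Printing Implicit Defensive.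

Fixpoint dF (n a b : nat) : nat :=
  match n with
  | 0 => 0
  | n'.+1 => if a == b then 0 else if b < a then (dF n' a./2 b).+1 else (dF n' a b./2).+1
  end.
Definition dd a b := dF (a + b) a b.

Lemma dF_fuel n m a b : 0 < a -> 0 < b -> a + b <= n -> a + b <= m -> dF n a b = dF m a b.
Proof.
elim: n m a b => [|n IH] [|m] a b ha hb hn hm /=; try lia.
case: eqP => // hab; case: ltnP => hba; congr _.+1; apply: IH; rewrite -?divn2; lia.
Qed.

Lemma ddE a b : 0 < a -> 0 < b ->
  dd a b = if a == b then 0 else if b < a then (dd a./2 b).+1 else (dd a b./2).+1.
Proof.
move=> ha hb; rewrite /dd.
have -> : a + b = (a + b).-1.+1 by lia.
rewrite /=.
case: eqP => // hab; case: ltnP => hba; congr _.+1; apply: dF_fuel; rewrite -?divn2; lia.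
Qed.

Lemma dd_refl a : dd a a = 0.
Proof. by rewrite /dd; case: (a + a) => //= n; rewrite eqxx. Qed.

Lemma ddLip b : forall x, 0 < b -> 1 < x -> dd x b <= (dd x./2 b).+1 /\ dd x./2 b <= (dd x b).+1.
Proof.
elim: b {-2}b (leqnn b) => [|n IH] b hbn x hb hx; first lia.
have hx2 : 0 < x./2 by rewrite -divn2; lia. have hx1 : 0 < x by lia.
case: (ltngtP x b) => hxb.
- rewrite [dd x b]ddE // [dd x./2 b]ddE //.
  have -> : (x == b) = false by lia.
  have -> : (x./2 == b) = false by rewrite -divn2; lia.
  have -> : (b < x) = false by lia.
  have -> : (b < x./2) = false by rewrite -divn2; lia.
  have hb2 : 0 < b./2 by rewrite -divn2; lia.
  have := IH b./2 _ x hb2 hx; rewrite -?divn2 in hbn *; lia.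
- rewrite [dd x b]ddE //.
  have -> : (x == b) = false by lia.
  rewrite hxb; lia.
- subst b; rewrite dd_refl [dd x./2 x]ddE //.
  have -> : (x./2 == x) = false by rewrite -divn2; lia.
  have -> : (x < x./2) = false by rewrite -divn2; lia.
  rewrite dd_refl; lia.
Qed.

Lemma ddChildL a b c : 0 < b -> b < a -> c./2 = a -> dd c b = (dd a b).+1.
Proof.
move=> hb hba hc; have hc1 : a < c by rewrite -hc -divn2 in hba *; lia.
rewrite [dd c b]ddE; try lia.
have -> : (c == b) = false by lia.
by rewrite ifT ?hc //; lia.
Qed.

Lemma ddChildR a b c : 0 < a -> a < b -> c./2 = b -> dd a c = (dd a b).+1.
Proof.
move=> ha hab hc; have hc1 : b < c by rewrite -hc -divn2 in hab *; lia.
rewrite [dd a c]ddE; try lia.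
have -> : (a == c) = false by lia.
by rewrite ifF ?hc //; lia.
Qed.


Definition lab r (x : GTV r) : nat := gt_label x.

Lemma lab_gt0 r (x : GTV r) : 0 < gt_label x.
Proof. by case: x => [[c k] hv]; rewrite /gt_label /=; case/andP: hv. Qed.

Lemma lab_lt r (x : GTV r) : gt_label x < 2 ^ r.+1.
Proof. case: x => [[c k] hv]; rewrite /gt_label /=. exact: ltn_ord. Qed.

Lemma leaf_copy r (x : GTV r) : gt_isleaf x -> gt_copy x = false.
Proof.
case: x => [[c k] hv0]; rewrite /gt_isleaf /gt_label /gt_copy /= => h; case/andP: hv0 => _ hv.
by move: hv; rewrite ltnNge h /=; case: c.
Qed.

Lemma gtv_eq r (x y : GTV r) : gt_label x = gt_label y -> gt_copy x = gt_copy y -> x = y.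
Proof.
case: x => [[c k] hx]; case: y => [[c' k'] hy]; rewrite /gt_label /gt_copy /= => hl hc.
subst c'; have ek : k = k' by apply: val_inj.
subst k'; congr exist; apply: bool_irrelevance.
Qed.

Lemma leaf_eq r (x y : GTV r) : gt_isleaf x -> gt_label x = gt_label y -> x = y.
Proof.
move=> hx hl; apply: gtv_eq => //; rewrite leaf_copy // leaf_copy //.
by move: hx; rewrite /gt_isleaf hl.
Qed.

Lemma in_Tset r i (x : GTV r) : (x \in Tset r i) = (gt_copy x == i) || gt_isleaf x.
Proof. by rewrite inE. Qed.

Lemma int_copy r i (x : GTV r) : x \in Tset r i -> ~~ gt_isleaf x -> gt_copy x = i.
Proof. by rewrite in_Tset => /orP[/eqP|->]. Qed.

Lemma adj_lab r (x y : GTV r) : GT_adj x y ->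
  (gt_label x == (gt_label y)./2) || (gt_label y == (gt_label x)./2).
Proof. by rewrite /GT_adj /T_edge => /orP[] /and3P[]. Qed.

Lemma adj_int r (x y : GTV r) : GT_adj x y -> ~~ gt_isleaf x -> ~~ gt_isleaf y ->
  gt_copy x = gt_copy y.
Proof.
rewrite /GT_adj /T_edge => /orP[] /and3P[hx hy _] lx ly;
by rewrite (int_copy hx lx) (int_copy hy ly).
Qed.

Lemma adj_leaf r (x y : GTV r) : GT_adj x y -> gt_isleaf x -> gt_label y = (gt_label x)./2.
Proof.
move=> /adj_lab /orP[] /eqP h; last by [].
rewrite /gt_isleaf => hl; have := lab_lt y; rewrite expnS h -divn2 in hl *; lia.
Qed.


Lemma LB r (u : GTV r) p : path (@GT_adj r) u p ->
  dd (gt_label u) (gt_label (last u p)) <= size p.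
Proof.
elim: p u => [|x p IH] u /=; first by rewrite dd_refl.
case/andP=> hux hp; have := IH x hp; move: (lab_gt0 (last x p)) => hL.
case/orP: (adj_lab hux) => /eqP h.
- have hx : 1 < gt_label x by have := lab_gt0 u; rewrite h -divn2; lia.
  have [_ ] := ddLip hL hx; rewrite -h; lia.
- have hu : 1 < gt_label u by have := lab_gt0 x; rewrite h -divn2; lia.
  have [+ _] := ddLip hL hu; rewrite -h; lia.
Qed.

Definition SW r (u v : GTV r) p :=
  [/\ path (@GT_adj r) u p, last u p = v & size p = dd (gt_label u) (gt_label v)].

Lemma SWs r (u v x : GTV r) p : SW u v (x :: p) ->
  SW x v p /\ (dd (gt_label x) (gt_label v)).+1 = dd (gt_label u) (gt_label v).
Proof.
case=> /= /andP[hux hp] hl hs.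
have := LB hp; rewrite hl => h1.
move: (lab_gt0 v) => hL.
have : dd (gt_label u) (gt_label v) <= (dd (gt_label x) (gt_label v)).+1.
  case/orP: (adj_lab hux) => /eqP h.
  - have hx : 1 < gt_label x by have := lab_gt0 u; rewrite h -divn2; lia.
    by have [_ ] := ddLip hL hx; rewrite -h.
  - have hu : 1 < gt_label u by have := lab_gt0 x; rewrite h -divn2; lia.
    by have [+ _] := ddLip hL hu; rewrite -h.
move=> h2; split; first split => //; lia.
Qed.

Lemma SWe r (u v : GTV r) p : SW u v p -> gt_label u = gt_label v -> p = [::] /\ u = v.
Proof.
case=> hp hl hs he; rewrite he dd_refl in hs.
by case: p hp hl hs.
Qed.

Lemma SWf r (u v : GTV r) p : SW u v p -> gt_label v < gt_label u ->
  exists x p', [/\ p = x :: p', gt_label x = (gt_label u)./2, SW x v p' & GT_adj u x].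
Proof.
move=> hsw hlt; have hu := lab_gt0 u; have hv := lab_gt0 v.
case: p hsw => [|x p'] hsw.
  case: hsw => _ _; rewrite ddE //; have -> : (gt_label u == gt_label v) = false by lia.
  by rewrite hlt.
have [hs hd] := SWs hsw.
case: (hsw) => /= /andP[hux _] _ _.
exists x, p'; split => //.
case/orP: (adj_lab hux) => /eqP h //.
have := ddChildL hv hlt (esym h); lia.
Qed.

Lemma SWb r (u v : GTV r) p : SW u v p -> gt_label u < gt_label v ->
  exists p', [/\ p = rcons p' v, gt_label (last u p') = (gt_label v)./2,
     SW u (last u p') p' & GT_adj (last u p') v].
Proof.
move=> hsw hlt; have hu := lab_gt0 u; have hv := lab_gt0 v.
case: (lastP p) hsw => [|p' z] hsw.
  case: hsw => _ _; rewrite ddE //; have -> : (gt_label u == gt_label v) = false by lia.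
  by rewrite ltnNge ltnW.
case: hsw; rewrite rcons_path last_rcons size_rcons => /andP[hp' hyz] hz hs; subst z.
have hd : dd (gt_label u) (gt_label v) = (dd (gt_label u) (gt_label v)./2).+1.
  rewrite [LHS]ddE //; have -> : (gt_label u == gt_label v) = false by lia.
  by rewrite ltnNge ltnW.
have hlb := LB hp'.
have hy : gt_label (last u p') = (gt_label v)./2.
  case/orP: (adj_lab hyz) => /eqP h //.
  have := ddChildR hu hlt (esym h); lia.
exists p'; split => //; split => //; rewrite hy; lia.
Qed.

Lemma half_int r (x y : GTV r) : gt_label y = (gt_label x)./2 -> ~~ gt_isleaf y.
Proof.
move=> h; rewrite /gt_isleaf -ltnNge h; have := lab_lt x; rewrite expnS -divn2; lia.
Qed.

Lemma T0 r n : forall (u v : GTV r) p, gt_label u + gt_label v < n -> ~~ gt_isleaf u ->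
  SW u v p -> forall w, w \in u :: p -> ~~ gt_isleaf w -> gt_copy w = gt_copy u.
Proof.
elim: n => [|n IH] u v p hn hu hsw w; first lia.
case: (ltngtP (gt_label u) (gt_label v)) => hl.
- have [p' [-> hy hsw' hyv]] := SWb hsw hl.
  have hyi := half_int hy.
  have hb : gt_label u + gt_label (last u p') < n.
    by have := lab_gt0 u; rewrite hy -divn2; lia.
  have IH' := IH _ _ _ hb hu hsw'.
  rewrite -rcons_cons mem_rcons inE => /orP[/eqP -> hw|hw hwi].
    by rewrite -(IH' _ (mem_last u p') hyi); apply/esym/adj_int.
  exact: IH' hw hwi.
- have [x [p' [-> hx hsw' hux]]] := SWf hsw hl.
  have hxi := half_int hx.
  have hc := adj_int hux hu hxi.
  rewrite inE => /orP[/eqP -> //|hw hwi].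
  rewrite hc; apply: (IH x v p') => //.
  have := lab_gt0 v; rewrite hx -divn2; lia.
- have [-> _] := SWe hsw hl.
  by rewrite inE => /eqP ->.
Qed.

Lemma T1 r n : forall (u v : GTV r) p q, gt_label u + gt_label v < n ->
  SW u v p -> SW u v q -> ~~ gt_isleaf u || ~~ gt_isleaf v -> p = q.
Proof.
elim: n => [|n IH] u v p q hn hp hq hi; first lia.
case: (ltngtP (gt_label u) (gt_label v)) => hl.
- have [p' [-> hy hsw' hyv]] := SWb hp hl.
  have [q' [-> hy' hsq' hyv']] := SWb hq hl.
  have hyi := half_int hy; have hyi' := half_int hy'.
  have e : last u p' = last u q'.
    apply: gtv_eq; first by rewrite hy hy'.
    case/orP: hi => hi.
      rewrite (T0 (n := (gt_label u + gt_label (last u p')).+1) _ hi hsw' (mem_last u p') hyi) //.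
      by rewrite (T0 (n := (gt_label u + gt_label (last u q')).+1) _ hi hsq' (mem_last u q') hyi').
    by rewrite (adj_int hyv hyi hi) (adj_int hyv' hyi' hi).
  rewrite -e in hsq'; congr rcons; apply: (IH u (last u p')) => //.
    have := lab_gt0 u; rewrite hy -divn2; lia.
  by rewrite hyi orbT.
- have [x [p' [-> hx hsw' hux]]] := SWf hp hl.
  have [y [q' [-> hy hsq' huy]]] := SWf hq hl.
  have hxi := half_int hx; have hyi := half_int hy.
  have e : x = y.
    apply: gtv_eq; first by rewrite hx hy.
    case/orP: hi => hi.
      by rewrite -(adj_int hux hi hxi) (adj_int huy hi hyi).
    have hvx : v \in x :: p' by case: hsw' => _ <- _; exact: mem_last.
    have hvy : v \in y :: q' by case: hsq' => _ <- _; exact: mem_last.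
    rewrite -(T0 (n := (gt_label x + gt_label v).+1) _ hxi hsw' hvx hi) //.
    by rewrite -(T0 (n := (gt_label y + gt_label v).+1) _ hyi hsq' hvy hi).
  subst y; congr cons; apply: (IH x v) => //.
    have := lab_gt0 v; rewrite hx -divn2; lia.
  by rewrite hxi.
- by have [-> _] := SWe hp hl; have [-> _] := SWe hq hl.
Qed.

Lemma mkpar r i (x : GTV r) : 1 < gt_label x ->
  exists w : GTV r, gt_label w = (gt_label x)./2 /\ gt_copy w = i.
Proof.
move=> h1; have h2 := lab_lt x.
have H : (gt_label x)./2 < 2 ^ r.+1 by rewrite expnS -divn2 in h2 *; lia.
have Hv : @gt_valid r (i, Ordinal H).
  rewrite /gt_valid /=; apply/andP; split; first by rewrite -divn2; lia.
  by apply/orP; left; rewrite expnS -divn2 in h2 *; lia.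
by exists (exist _ (i, Ordinal H) Hv).
Qed.

Lemma Tadj r i (x y : GTV r) : x \in Tset r i -> y \in Tset r i ->
  (gt_label x == (gt_label y)./2) || (gt_label y == (gt_label x)./2) ->
  induced (@GT_adj r) (Tset r i) x y.
Proof.
move=> hx hy h; rewrite /induced hx hy /= /GT_adj /T_edge.
by case: i hx hy => hx hy; rewrite hx hy h ?orbT.
Qed.

Lemma Ex r i n : forall u v : GTV r, gt_label u + gt_label v < n ->
  u \in Tset r i -> v \in Tset r i ->
  exists p, [/\ path (induced (@GT_adj r) (Tset r i)) u p, last u p = v
             & size p = dd (gt_label u) (gt_label v)].
Proof.
elim: n => [|n IH] u v hn hu hv; first lia.
have hu0 := lab_gt0 u; have hv0 := lab_gt0 v.
case: (ltngtP (gt_label u) (gt_label v)) => hl.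
- have h1 : 1 < gt_label v by lia.
  have [w [hw hwc]] := mkpar i h1.
  have hwT : w \in Tset r i by rewrite in_Tset hwc eqxx.
  have [p [hp hpl hps]] : exists p, [/\ path (induced (@GT_adj r) (Tset r i)) u p, last u p = w
             & size p = dd (gt_label u) (gt_label w)].
    by apply: IH => //; rewrite hw -divn2 in hn *; lia.
  exists (rcons p v); rewrite rcons_path last_rcons size_rcons hp hpl /=; split => //.
    by apply: Tadj => //; rewrite hw eqxx.
  rewrite hps hw [RHS]ddE //; have -> : (gt_label u == gt_label v) = false by lia.
  by rewrite ltnNge ltnW.
- have h1 : 1 < gt_label u by lia.
  have [w [hw hwc]] := mkpar i h1.
  have hwT : w \in Tset r i by rewrite in_Tset hwc eqxx.
  have [p [hp hpl hps]] : exists p, [/\ path (induced (@GT_adj r) (Tset r i)) w p, last w p = v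
             & size p = dd (gt_label w) (gt_label v)].
    by apply: IH => //; rewrite hw -divn2 in hn *; lia.
  exists (w :: p); rewrite /= hp hpl andbT; split => //.
    by apply: Tadj => //; apply/orP; right; rewrite hw.
  rewrite hps hw [RHS]ddE //; have -> : (gt_label u == gt_label v) = false by lia.
  by rewrite hl.
- exists [::]; rewrite /= hl dd_refl; split => //.
  case: (boolP (gt_isleaf u)) => hlu; first by apply: leaf_eq.
  apply: gtv_eq => //; rewrite (int_copy hu hlu) (int_copy hv) //.
  by rewrite /gt_isleaf -hl.
Qed.

Lemma shortcut (T : eqType) (e : rel T) (u : T) p : path e u p -> ~~ uniq (u :: p) ->
  exists q, [/\ path e u q, last u q = last u p & size q < size p].
Proof.
elim: p u => [|x p IH] u hp; first by [].
rewrite [uniq _]/= negb_and negbK => /orP[hu|hn].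
  move: hp; case/splitPr: hu => s1 s2 hp.
  exists s2; move: hp; rewrite cat_path => /andP[_ /= /andP[_ h2]]; split => //.
    by rewrite last_cat.
  by rewrite size_cat /=; lia.
move: hp => /= /andP[hux hp'].
have [q [hq hql hqs]] := IH x hp' hn.
by exists (x :: q); rewrite /= hux hq hql; split => //; lia.
Qed.

Lemma induced_sub r (S : {set GTV r}) : subrel (induced (@GT_adj r) S) (@GT_adj r).
Proof. by move=> x y /and3P[]. Qed.

Lemma SW_SP r (u v : GTV r) p : SW u v p -> shortest_path (@GT_adj r) u v p.
Proof.
move=> hsw; case: (hsw) => hp hl hs; split.
  rewrite /gpath /walk hp hl eqxx /=.
  apply/negPn/negP => hn.
  have [q [hq hql hqs]] := shortcut hp hn.
  by have := LB hq; rewrite hql hl -hs leqNgt hqs.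
move=> q /andP[hq /eqP hql]; have := LB hq; by rewrite hql -hs.
Qed.

Lemma ExGT r i (u v : GTV r) : u \in Tset r i -> v \in Tset r i ->
  exists p, path (induced (@GT_adj r) (Tset r i)) u p /\ SW u v p.
Proof.
move=> hu hv.
have [p [hp hl hs]] := Ex (n := (gt_label u + gt_label v).+1) (leqnn _) hu hv.
exists p; split => //; split => //; apply: (sub_path _ hp); exact: induced_sub.
Qed.

Lemma SP_SW r i (u v : GTV r) p : u \in Tset r i -> v \in Tset r i ->
  shortest_path (@GT_adj r) u v p -> SW u v p.
Proof.
move=> hu hv [/andP[/andP[hp /eqP hl] _] hmin].
have [p0 [_ [hp0 hl0 hs0]]] := ExGT hu hv.
have h1 := hmin p0; rewrite /walk hp0 hl0 eqxx in h1.
have := LB hp; rewrite hl => h2.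
split => //; apply/eqP; rewrite eqn_leq h2 andbT -hs0; exact: h1 isT.
Qed.

Lemma isdistE (T : eqType) (e : rel T) u v D :
  (exists p, walk e u v p /\ size p = D) -> (forall p, walk e u v p -> D <= size p) ->
  forall n, is_dist e u v n <-> n = D.
Proof.
move=> [p0 [hp0 hs0]] hlb n; split.
  case=> [[p [hp hs]] hmin]; have := hmin p0 hp0; have := hlb p hp; lia.
by move=> ->; split => //; exists p0.
Qed.

Lemma ql_leaf r (x : GTV r) : quasi_leaf x = gt_isleaf x.
Proof. by rewrite /quasi_leaf !inE; case: (gt_copy x); case: (gt_isleaf x). Qed.

Lemma SW_nil r (u v : GTV r) : SW u v [::] -> u = v.
Proof. by case. Qed.

Unset Implicit Arguments.
Set Strict Implicit.

Theorem mainTheorem1 (r : nat) (hr : 2 <= r) (i : bool) :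
  isometric_induced (@GT_adj r) (Tset r i) /\
  (forall u v : GTV r, u \in Tset r i -> v \in Tset r i ->
     ([&& quasi_leaf u, quasi_leaf v & u != v] ->
        exists p1 p2, p1 <> p2 /\
          shortest_path (@GT_adj r) u v p1 /\ shortest_path (@GT_adj r) u v p2 /\
          (forall q, shortest_path (@GT_adj r) u v q -> q = p1 \/ q = p2)) /\
     (~~ [&& quasi_leaf u, quasi_leaf v & u != v] ->
        exists p, shortest_path (@GT_adj r) u v p /\
          (forall q, shortest_path (@GT_adj r) u v q -> q = p))).
Proof.
split.
  move=> u v hu hv n.
  have [p0 [hp0 [hp0' hl0 hs0]]] := ExGT hu hv.
  have E1 := @isdistE _ (induced (@GT_adj r) (Tset r i)) u v (dd (gt_label u) (gt_label v)).
  have E2 := @isdistE _ (@GT_adj r) u v (dd (gt_label u) (gt_label v)).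
  rewrite E1; first (rewrite E2; first by []).
  - by exists p0; rewrite /walk hp0' hl0 eqxx.
  - move=> p /andP[hp /eqP hl]; have := LB hp; by rewrite hl.
  - by exists p0; rewrite /walk hp0 hl0 eqxx.
  - move=> p /andP[hp /eqP hl]; have := LB (sub_path (@induced_sub r _) hp); by rewrite hl.
move=> u v hu hv; split.
  case/and3P; rewrite !ql_leaf => hlu hlv huv.
  have hu2 : 1 < gt_label u.
    have h4 : 2 ^ 1 < 2 ^ r by rewrite ltn_exp2l.
    move: hlu; rewrite /gt_isleaf => h; rewrite expn1 in h4; lia.
  have [p0 [_ hsw0]] := ExGT hu hv.
  case: p0 hsw0 => [|x0 p0] hsw0; first by rewrite (SW_nil hsw0) eqxx in huv.
  have [hsw0' hd0] := SWs hsw0.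
  have hx0 : gt_label x0 = (gt_label u)./2.
    by case: hsw0 => /= /andP[h _] _ _; apply: adj_leaf.
  have hc : forall c, exists w p, [/\ gt_copy w = c, gt_label w = (gt_label u)./2,
       SW w v p & SW u v (w :: p)].
    move=> c; have [w [hw hwc]] := mkpar c hu2.
    have hwT : w \in Tset r c by rewrite in_Tset hwc eqxx.
    have huT : u \in Tset r c by rewrite in_Tset hlu orbT.
    have hvT : v \in Tset r c by rewrite in_Tset hlv orbT.
    have [p [_ hsw]] := ExGT hwT hvT.
    exists w, p; split => //.
    case: (hsw) => hp hl hs; split => /=; last by rewrite hs hw -hx0.
      rewrite hp andbT; apply: (induced_sub (S := Tset r c)); apply: Tadj => //.
      by apply/orP; right; rewrite hw.
    by [].
  have [w1 [p1 [hc1 hw1 hs1 hS1]]] := hc false.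
  have [w2 [p2 [hc2 hw2 hs2 hS2]]] := hc true.
  exists (w1 :: p1), (w2 :: p2); split.
    by case=> e _; move: hc1; rewrite e hc2.
  split; first exact: SW_SP.
  split; first exact: SW_SP.
  move=> q /(SP_SW hu hv) hq.
  case: q hq => [|y q] hq; first by rewrite (SW_nil hq) eqxx in huv.
  have [hq' _] := SWs hq.
  have hy : gt_label y = (gt_label u)./2.
    by case: hq => /= /andP[h _] _ _; apply: adj_leaf.
  have hyi := half_int hy.
  case hcy : (gt_copy y).
    right; have e : y = w2 by apply: gtv_eq; rewrite ?hy ?hw2 ?hc2.
    subst y; congr cons; apply: (T1 (n := (gt_label w2 + gt_label v).+1) _ hq' hs2) => //.
    by rewrite hyi.
  left; have e : y = w1 by apply: gtv_eq; rewrite ?hy ?hw1 ?hc1.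
  subst y; congr cons; apply: (T1 (n := (gt_label w1 + gt_label v).+1) _ hq' hs1) => //.
  by rewrite hyi.
move=> hn.
have [p0 [_ hsw0]] := ExGT hu hv.
exists p0; split; first exact: SW_SP.
move=> q /(SP_SW hu hv) hq.
case: (eqVneq u v) => [e | ne].
  subst v; by have [-> _] := SWe hq erefl; have [-> _] := SWe hsw0 erefl.
rewrite ne andbT negb_and !ql_leaf in hn.
exact: (T1 (n := (gt_label u + gt_label v).+1) _ hq hsw0).
Qed.
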